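(* There is a bijection $\beta\mapsto g(\beta)$ from the set of left collinearity points of $B$ onto the set of oriented lines in $\mathbb{R}^3$ such that, for all $p,P\in\mathbb{R}^3$, the pseudo spherical condition for $(p,P)$ at $\beta$ holds if and only if $p\in g(\beta)$. Likewise, there is a bijection $\beta\mapsto g(\beta)$ from the set of right collinearity points onto the set of oriented lines such that, for all $p,P\in\mathbb{R}^3$, the pseudo spherical condition for $(p,P)$ at $\beta$ holds if and only if $P\in g(\beta)$.
   Context: Write a direct isometry as $v\mapsto Mv+y$ ($M\in SO(3)$) and put $x=-M^ty$, $r=\langle y,y\rangle$. It corresponds to $(h:M:x:y:r)=(1:m_{11}:\dots:m_{33}:x_1:x_2:x_3:y_1:y_2:y_3:r)\in\mathbb{P}^{16}_{\mathbb{C}}$. $X$ is the complex Zariski closure of all such points. Throughout, $\langle u,u'\rangle=u^tu'$ is the complex bilinear form on $\mathbb{C}^3$. The boundary is $B=X\cap\{h=0\}$. A point $\beta=(0:M:x:y:r)\in B$ with $M=0$ is a left collinearity point if $x\neq0$ and $y=0$, and a right collinearity point if $x=0$ and $y\ne0$. The pseudo spherical condition for $(p,P)$ at $\beta$ is the complex equation $r-2\langle p,x\rangle-2\langle y,P\rangle-2\langle Mp,P\rangle=0$. *)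

(* Defs.v *)
From HB Require Import structures.
From mathcomp Require Import all_boot all_order all_algebra.
From mathcomp Require Import reals.
From mathcomp.real_closed Require Import complex.
From mathcomp Require Import mpoly.
Set Implicit Arguments. Unset Strict Implicit. Unset Printing Implicit Defensive.
Import Order.TTheory GRing.Theory Num.Theory.
Local Open Scope ring_scope.

Section Defs.
Variable R : realType.
Local Notation C := (R[i]).

Definition toC (a : R) : C := Complex a 0.
Definition vC (u : 'cV[R]_3) : 'cV[C]_3 := map_mx toC u.

(* the complex bilinear form <u,u'> = u^t u' on C^3 (no conjugation) *)
Definition cdot (u u' : 'cV[C]_3) : C := (u^T *m u') 0 0.
Definition rdot (u u' : 'cV[R]_3) : R := (u^T *m u') 0 0.

(* homogeneous coordinates (h : m11 : m12 : ... : m33 : x1:x2:x3 : y1:y2:y3 : r)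
   of P^16_C, represented by (nonzero) row vectors of length 17 *)
Definition mkpt (h : C) (M : 'M[C]_3) (x y : 'cV[C]_3) (r : C) : 'rV[C]_17 :=
  \row_(k < 17)
    (if (k == 0 :> nat) then h
     else if (k < 10)%N then M (inord ((k - 1) %/ 3)) (inord ((k - 1) %% 3))
     else if (k < 13)%N then x (inord (k - 10)) 0
     else if (k < 16)%N then y (inord (k - 13)) 0
     else r).

Definition ph (v : 'rV[C]_17) : C := v 0 (inord 0).
Definition pM (v : 'rV[C]_17) : 'M[C]_3 := \matrix_(i < 3, j < 3) v 0 (inord (1 + 3 * i + j)).
Definition px (v : 'rV[C]_17) : 'cV[C]_3 := \col_(i < 3) v 0 (inord (10 + i)).
Definition py (v : 'rV[C]_17) : 'cV[C]_3 := \col_(i < 3) v 0 (inord (13 + i)).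
Definition pr (v : 'rV[C]_17) : C := v 0 (inord 16).

Definition proj_eq (v w : 'rV[C]_17) : Prop := exists2 c : C, c != 0 & w = c *: v.

Definition is_rot (M : 'M[R]_3) : Prop := M^T *m M = 1%:M /\ \det M = 1.

(* the point of P^16 attached to the direct isometry v |-> M v + y *)
Definition iso_pt (M : 'M[R]_3) (y : 'cV[R]_3) : 'rV[C]_17 :=
  mkpt 1 (map_mx toC M) (vC (- (M^T *m y))) (vC y) (toC (rdot y y)).

(* X : projective Zariski closure of the set of points iso_pt M y :
   a point lies in X iff every homogeneous polynomial vanishing on all
   iso_pt M y vanishes on it *)
Definition inX (v : 'rV[C]_17) : Prop :=
  v != 0 /\
  forall (d : nat) (F : mpoly.mpoly 17 C),
    F \is @mpoly.ishomog1 17 C d (@mpoly.mdeg 17) ->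
    (forall M y, is_rot M -> mpoly.meval (fun k => iso_pt M y 0 k) F = 0) ->
    mpoly.meval (fun k => v 0 k) F = 0.

Definition inB (v : 'rV[C]_17) : Prop := inX v /\ ph v = 0.

Definition left_coll (v : 'rV[C]_17) : Prop :=
  inB v /\ pM v = 0 /\ px v != 0 /\ py v = 0.
Definition right_coll (v : 'rV[C]_17) : Prop :=
  inB v /\ pM v = 0 /\ px v = 0 /\ py v != 0.

Definition pseudo_sph (b : 'rV[C]_17) (p P : 'cV[R]_3) : Prop :=
  pr b - 2%:R * cdot (vC p) (px b) - 2%:R * cdot (py b) (vC P)
       - 2%:R * cdot (pM b *m vC p) (vC P) = 0.

(* oriented lines in R^3, in normal form (d, a): d a unit direction vector,
   a the foot of the perpendicular from the origin (a ⟂ d); the line is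
   {a + t d | t in R} oriented by d. *)
Definition oline : Type :=
  {da : 'cV[R]_3 * 'cV[R]_3 | (rdot da.1 da.1 == 1) && (rdot da.1 da.2 == 0)}.

Definition on_line (p : 'cV[R]_3) (l : oline) : Prop :=
  exists t : R, p = (val l).2 + t *: (val l).1.

End Defs.

(* Main.v *)
Require Import Defs.
From HB Require Import structures.
From mathcomp Require Import all_boot all_order all_algebra.
From mathcomp Require Import reals.
From mathcomp.real_closed Require Import complex.
From mathcomp Require Import mpoly.
From mathcomp Require Import ring lra.
Import Order.TTheory GRing.Theory Num.Theory.
Set Implicit Arguments. Unset Strict Implicit. Unset Printing Implicit Defensive.
Local Open Scope complex_scope.
Local Open Scope ring_scope.
Definition i0 : 'I_3 := @Ordinal 3 0 isT.
Definition i1 : 'I_3 := @Ordinal 3 1 isT.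
Definition i2 : 'I_3 := @Ordinal 3 2 isT.
Lemma ord3P (P : 'I_3 -> Prop) : P i0 -> P i1 -> P i2 -> forall i, P i.
Proof.
move=> H0 H1 H2 [[|[|[|m]]] Hm] //.
- by rewrite (_ : Ordinal Hm = i0) //; apply: val_inj.
- by rewrite (_ : Ordinal Hm = i1) //; apply: val_inj.
- by rewrite (_ : Ordinal Hm = i2) //; apply: val_inj.
Qed.
Lemma sum3 (V : nmodType) (f : 'I_3 -> V) : \sum_(i < 3) f i = f i0 + f i1 + f i2.
Proof.
rewrite !big_ord_recr big_ord0 /= add0r.
by congr (f _ + f _ + f _); apply: val_inj.
Qed.
Lemma inord3_0 : inord 0 = i0. Proof. by apply: val_inj; rewrite /= inordK. Qed.
Lemma inord3_1 : inord 1 = i1. Proof. by apply: val_inj; rewrite /= inordK. Qed.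
Lemma inord3_2 : inord 2 = i2. Proof. by apply: val_inj; rewrite /= inordK. Qed.

Definition mkptT (T : pzRingType) (h : T) (M : 'M[T]_3) (x y : 'cV[T]_3) (r : T) : 'rV[T]_17 :=
  \row_(k < 17)
    (if (k == 0 :> nat) then h
     else if (k < 10)%N then M (inord ((k - 1) %/ 3)) (inord ((k - 1) %% 3))
     else if (k < 13)%N then x (inord (k - 10)) 0
     else if (k < 16)%N then y (inord (k - 13)) 0
     else r).
Definition phT (T : pzRingType) (v : 'rV[T]_17) : T := v 0 (inord 0).
Definition pMT (T : pzRingType) (v : 'rV[T]_17) : 'M[T]_3 := \matrix_(i < 3, j < 3) v 0 (inord (1 + 3 * i + j)).
Definition pxT (T : pzRingType) (v : 'rV[T]_17) : 'cV[T]_3 := \col_(i < 3) v 0 (inord (10 + i)).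
Definition pyT (T : pzRingType) (v : 'rV[T]_17) : 'cV[T]_3 := \col_(i < 3) v 0 (inord (13 + i)).
Definition prT (T : pzRingType) (v : 'rV[T]_17) : T := v 0 (inord 16).

Lemma mkptE (R : realType) : @mkpt R = @mkptT R[i]. Proof. by []. Qed.
Lemma phE (R : realType) : @ph R = @phT R[i]. Proof. by []. Qed.
Lemma pME (R : realType) : @pM R = @pMT R[i]. Proof. by []. Qed.
Lemma pxE (R : realType) : @px R = @pxT R[i]. Proof. by []. Qed.
Lemma pyE (R : realType) : @py R = @pyT R[i]. Proof. by []. Qed.
Lemma prE (R : realType) : @pr R = @prT R[i]. Proof. by []. Qed.

Ltac ord3s := rewrite ?inord3_0 ?inord3_1 ?inord3_2.

Section MK.
Variables (T : pzRingType) (h : T) (M : 'M[T]_3) (x y : 'cV[T]_3) (r : T).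
Lemma ph_mk : phT (mkptT h M x y r) = h.
Proof. by rewrite /phT mxE inordK. Qed.
Lemma pr_mk : prT (mkptT h M x y r) = r.
Proof. by rewrite /prT mxE inordK. Qed.
Lemma px_mk : pxT (mkptT h M x y r) = x.
Proof.
apply/matrixP => i j; rewrite (ord1 j) !mxE; move: i; apply: ord3P;
  by rewrite inordK //= ?subnn; ord3s.
Qed.
Lemma py_mk : pyT (mkptT h M x y r) = y.
Proof.
apply/matrixP => i j; rewrite (ord1 j) !mxE; move: i; apply: ord3P;
  by rewrite inordK //= ?subnn; ord3s.
Qed.
Lemma pM_mk : pMT (mkptT h M x y r) = M.
Proof.
apply/matrixP => i j; rewrite !mxE; move: i; apply: ord3P; move: j; apply: ord3P;
  by rewrite inordK //=; ord3s.
Qed.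
End MK.
Lemma mk_eta (T : pzRingType) (v : 'rV[T]_17) :
  v = mkptT (phT v) (pMT v) (pxT v) (pyT v) (prT v).
Proof.
apply/matrixP => i k; rewrite (ord1 i) !mxE; case: k => m Hm.
do 17 (case: m Hm => [|m] Hm;
  [ rewrite /= ?mxE; congr (v 0 _); apply: val_inj; rewrite /= ?inordK //;
    rewrite ?inordK // | ]).
by [].
Qed.
Lemma mk_scale (T : pzRingType) (c h : T) M (x y : 'cV[T]_3) r :
  c *: mkptT h M x y r = mkptT (c * h) (c *: M) (c *: x) (c *: y) (c * r).
Proof. by apply/matrixP => i k; rewrite !mxE; repeat case: ifP; rewrite ?mxE. Qed.
Lemma mk_map (T S : pzRingType) (f : {rmorphism T -> S}) h M (x y : 'cV[T]_3) r :
  map_mx f (mkptT h M x y r) = mkptT (f h) (map_mx f M) (map_mx f x) (map_mx f y) (f r).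
Proof. by apply/matrixP => i k; rewrite !mxE; repeat case: ifP; rewrite ?mxE. Qed.
Lemma meval_horner (C : comNzRingType) n (F : {mpoly C[n]}) (h : 'I_n -> {poly C}) z :
  (mmap polyC h F).[z] = meval (fun i => (h i).[z]) F.
Proof.
rewrite /meval /mmap horner_sum; apply: eq_bigr => m _.
rewrite hornerM hornerC /mmap1 horner_prod; congr (_ * _).
by apply: eq_bigr => i _; rewrite horner_exp.
Qed.

Lemma key_poly (C : numFieldType) n (F : {mpoly C[n]}) (h : 'I_n -> {poly C}) :
  (forall k : nat, meval (fun i => (h i).[k.+1%:R]) F = 0) ->
  forall z, meval (fun i => (h i).[z]) F = 0.
Proof.
move=> H z; rewrite -meval_horner.
suff ->: mmap polyC h F = 0 by rewrite horner0.
apply/eqP; apply/negPn/negP => nz.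
set p := mmap polyC h F.
have := max_poly_roots nz (rs := [seq (k.+1)%:R | k <- iota 0 (size p)]).
rewrite size_map size_iota ltnn => Hc.
suff: false by []. apply: Hc.
  by apply/allP => _ /mapP [k _ ->]; rewrite /root meval_horner H.
rewrite map_inj_uniq ?iota_uniq // => a b /eqP; rewrite eqr_nat eqSS => /eqP -> //. 
Qed.

Lemma meval_homog (C : comNzRingType) n d (F : {mpoly C[n]}) (c : C) (v : 'I_n -> C) :
  F \is @ishomog1 n C d (@mdeg n) ->
  meval (fun i => c * v i) F = c ^+ d * meval v F.
Proof.
move=> /dhomogP hF; rewrite !mevalE big_distrr /= big_seq [RHS]big_seq.
apply: eq_bigr => m /hF <-; rewrite mulrCA; congr (_ * _).
transitivity (c ^+ (\sum_i m i)%N * \prod_(i < n) v i ^+ m i); last first.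
  by congr (_ ^+ _ * _); rewrite -mdegE.
rewrite (eq_bigr (fun i => c ^+ m i * v i ^+ m i)); last by move=> i _; rewrite exprMn.
by rewrite big_split /= prodrXr.
Qed.

Definition dotT (T : pzRingType) (u w : 'cV[T]_3) : T := (u^T *m w) 0 0.
Lemma dotE (T : comPzRingType) (u w : 'cV[T]_3) :
  dotT u w = u i0 0 * w i0 0 + u i1 0 * w i1 0 + u i2 0 * w i2 0.
Proof. by rewrite /dotT mxE sum3 !mxE. Qed.
Lemma cdotE (R : realType) : @cdot R = @dotT R[i]. Proof. by []. Qed.
Lemma rdotE (R : realType) : @rdot R = @dotT R. Proof. by []. Qed.
Lemma dot_map (T S : comPzRingType) (f : {rmorphism T -> S}) u w :
  f (dotT u w) = dotT (map_mx f u) (map_mx f w).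
Proof. by rewrite !dotE !mxE !rmorphD !rmorphM. Qed.

Definition crE (T : pzRingType) (a b c : T) (i j : nat) : T :=
  match i, j with
  | 0, 1 => - c | 0, 2 => b | 1, 0 => c | 1, 2 => - a | 2, 0 => - b | 2, 1 => a
  | _, _ => 0 end.
Lemma crE_map (T S : pzRingType) (f : {rmorphism T -> S}) a b c i j :
  f (crE a b c i j) = crE (f a) (f b) (f c) i j.
Proof.
by case: i => [|[|[|i]]]; case: j => [|[|[|j]]]; rewrite /= ?rmorphN ?rmorph0.
Qed.
Lemma crE_scale (T : comPzRingType) (k a b c : T) i j :
  crE (k * a) (k * b) (k * c) i j = k * crE a b c i j.
Proof.
by case: i => [|[|[|i]]]; case: j => [|[|[|j]]]; rewrite /= ?mulrN ?mulr0.
Qed.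

Definition Ngen (T : pzRingType) (a b : T) (q : 'cV[T]_3) : 'M[T]_3 :=
  \matrix_(i < 3, j < 3) ((if (i == j :> nat) then a else 0) + 2 * q i 0 * q j 0
       + b * crE (q i0 0) (q i1 0) (q i2 0) i j).
Lemma Ngen_map (T S : pzRingType) (f : {rmorphism T -> S}) a b q :
  map_mx f (Ngen a b q) = Ngen (f a) (f b) (map_mx f q).
Proof.
apply/matrixP => i j; rewrite !mxE !rmorphD !rmorphM crE_map rmorph_nat ?mxE.
by case: ifP; rewrite ?rmorph0.
Qed.

Definition Dq (T : pzRingType) (q : 'cV[T]_3) : T := 1 + dotT q q.
Definition Nmat (T : pzRingType) (q : 'cV[T]_3) : 'M[T]_3 := Ngen (1 - dotT q q) 2 q.
Definition pt (T : pzRingType) (side : bool) (q y : 'cV[T]_3) : 'rV[T]_17 :=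
  if side then mkptT (Dq q) (Nmat q) (Dq q *: y) (- (Nmat q *m y)) (Dq q * dotT y y)
  else mkptT (Dq q) (Nmat q) (- ((Nmat q)^T *m y)) (Dq q *: y) (Dq q * dotT y y).

Lemma pt_map (T S : comPzRingType) (f : {rmorphism T -> S}) side q y :
  map_mx f (pt side q y) = pt side (map_mx f q) (map_mx f y).
Proof.
rewrite /pt /Dq /Nmat; case: side; rewrite mk_map ?map_mxN ?map_mxM -?map_trmx
  !map_mxZ !Ngen_map !rmorphM !rmorphD ?rmorphN ?rmorphB !rmorph1 !dot_map //.
Qed.

Lemma det3 (T : comPzRingType) (A : 'M[T]_3) :
  \det A = A i0 i0 * (A i1 i1 * A i2 i2 - A i1 i2 * A i2 i1)
         - A i0 i1 * (A i1 i0 * A i2 i2 - A i1 i2 * A i2 i0)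
         + A i0 i2 * (A i1 i0 * A i2 i1 - A i1 i1 * A i2 i0).
Proof.
have ->: A = \matrix_(i < 3, j < 3) A (inord i) (inord j).
  by apply/matrixP => i j; rewrite mxE !inord_val.
rewrite (expand_det_row _ i0) sum3 /cofactor.
rewrite !(expand_det_row _ ord0) !big_ord_recr !big_ord0 /= /cofactor !det_mx11 !mxE /=.
ring.
Qed.
Lemma NtN (T : comPzRingType) (q : 'cV[T]_3) : (Nmat q)^T *m Nmat q = (Dq q ^+ 2)%:M.
Proof.
rewrite /Nmat /Dq dotE.
apply/matrixP => i j; rewrite !mxE sum3 !mxE.
move: i; apply: ord3P; move: j; apply: ord3P; rewrite /= ?mulr1n ?mulr0n; ring.
Qed.
Lemma detN (T : comPzRingType) (q : 'cV[T]_3) : \det (Nmat q) = Dq q ^+ 3.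
Proof. rewrite det3 /Nmat /Dq dotE !mxE /=; ring. Qed.
Lemma trmxZ' (T : pzRingType) (a : T) (A : 'M[T]_3) : (a *: A)^T = a *: A^T.
Proof. by apply/matrixP => i j; rewrite !mxE. Qed.

Lemma Dq_gt0 (R : realType) (q : 'cV[R]_3) : 0 < Dq q.
Proof. rewrite /Dq dotE; nra. Qed.

Lemma rot_cay (R : realType) (q : 'cV[R]_3) : is_rot ((Dq q)^-1 *: Nmat q).
Proof.
have hD: Dq q != 0 by rewrite gt_eqF // Dq_gt0.
split.
  rewrite trmxZ' -scalemxAl -scalemxAr scalerA NtN scale_scalar_mx.
  congr (_ %:M); field; done.
rewrite detZ detN; field; done.
Qed.

Lemma meval_scale (C : comNzRingType) d (F : {mpoly C[17]}) (c : C) (v : 'rV[C]_17) :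
  F \is @ishomog1 17 C d (@mdeg 17) ->
  meval (fun k => (c *: v) 0 k) F = c ^+ d * meval (fun k => v 0 k) F.
Proof.
move=> hF; rewrite -meval_homog //; apply: meval_eq => k; by rewrite mxE.
Qed.

Definition vanish (R : realType) (F : {mpoly R[i][17]}) :=
  forall M y, is_rot M -> meval (fun k => iso_pt M y 0 k) F = 0.

Lemma step1 (R : realType) side (q y : 'cV[R]_3) d (F : {mpoly R[i][17]}) :
  F \is @ishomog1 17 R[i] d (@mdeg 17) -> vanish F ->
  meval (fun k => pt side (vC q) (vC y) 0 k) F = 0.
Proof.
move=> hF hV.
have hD: Dq q != 0 by rewrite gt_eqF // Dq_gt0.
set M := (Dq q)^-1 *: Nmat q.
have hM := rot_cay q.
have MtM : M^T *m M = 1%:M by case: hM.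
have eN : Nmat q = Dq q *: M by rewrite /M scalerA divff // scale1r.
have -> : pt side (vC q) (vC y) = map_mx (real_complex R) (pt side q y).
  by rewrite pt_map.
have -> : pt side q y = Dq q *: mkptT 1 M (- (M^T *m (if side then - (M *m y) else y)))
    (if side then - (M *m y) else y) (dotT (if side then - (M *m y) else y) (if side then - (M *m y) else y)).
  rewrite mk_scale /pt mulr1; case: side.
    have ->: dotT (- (M *m y)) (- (M *m y)) = dotT y y.
      have ->: dotT (- (M *m y)) (- (M *m y)) = dotT (M *m y) (M *m y).
        by rewrite !dotE !mxE; ring.
      by rewrite /dotT trmx_mul -mulmxA (mulmxA M^T) MtM mul1mx.
    rewrite eN -scalemxAl !scalerN !mulmxN !scalerN opprK mulmxA MtM mul1mx //.
  by rewrite eN trmxZ' -scalemxAl scalerN.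
rewrite map_mxZ mk_map rmorph1 (meval_scale _ _ hF).
have := hV M (if side then - (M *m y) else y) hM; rewrite /iso_pt mkptE /vC map_mxN => ->; by rewrite mulr0.
Qed.

Definition linP (R : realType) (z : 'cV[R[i]]_3) : 'cV[{poly R[i]}]_3 :=
  \col_i ((complex.Re (z i 0))%:C%:P + (complex.Im (z i 0))%:C%:P * 'X).

Lemma linP_nat (R : realType) (z : 'cV[R[i]]_3) (n : nat) :
  map_mx (horner_eval (n%:R : R[i])) (linP z) = vC (\col_i (complex.Re (z i 0) + n%:R * complex.Im (z i 0))).
Proof.
apply/matrixP => i j; rewrite !mxE horner_evalE hornerD hornerM !hornerC hornerX.
rewrite -[toC _]/((_ + _)%:C) rmorphD rmorphM rmorph_nat mulrC //.
Qed.

Lemma linP_i (R : realType) (z : 'cV[R[i]]_3) :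
  map_mx (horner_eval ('i : R[i])) (linP z) = z.
Proof.
apply/matrixP => i j; rewrite !mxE horner_evalE hornerD hornerM !hornerC hornerX (ord1 j).
by rewrite mulrC -complexE.
Qed.

Lemma step2 (R : realType) side (q y : 'cV[R[i]]_3) d (F : {mpoly R[i][17]}) :
  F \is @ishomog1 17 R[i] d (@mdeg 17) -> vanish F ->
  meval (fun k => pt side q y 0 k) F = 0.
Proof.
move=> hF hV.
have E : forall w, meval (fun k => (pt side (linP q) (linP y) 0 k).[w]) F =
   meval (fun k => pt side (map_mx (horner_eval w) (linP q)) (map_mx (horner_eval w) (linP y)) 0 k) F.
  by move=> w; rewrite -pt_map; apply: meval_eq => k; rewrite mxE.
transitivity (meval (fun k => (pt side (linP q) (linP y) 0 k).['i]) F).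
  by rewrite E !linP_i.
apply: (key_poly (h := fun k => pt side (linP q) (linP y) 0 k)) => n /=.
by rewrite E !linP_nat (step1 _ _ _ hF hV).
Qed.

Definition Qc (T : pzRingType) (side : bool) (s : T) (k y0 w : 'cV[T]_3) : 'rV[T]_17 :=
  if side then
    mkptT (s ^+ 6) (s ^+ 4 *: Ngen (s ^+ 2) (2 * s) k) (s ^+ 2 *: (y0 + s ^+ 2 *: w))
      (- (Ngen (s ^+ 2) (2 * s) k *m (y0 + s ^+ 2 *: w))) (2 * dotT y0 w + s ^+ 2 * dotT w w)
  else
    mkptT (s ^+ 6) (s ^+ 4 *: Ngen (s ^+ 2) (2 * s) k)
      (- ((Ngen (s ^+ 2) (2 * s) k)^T *m (y0 + s ^+ 2 *: w))) (s ^+ 2 *: (y0 + s ^+ 2 *: w))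
      (2 * dotT y0 w + s ^+ 2 * dotT w w).

Lemma Qc_map (T S : comPzRingType) (f : {rmorphism T -> S}) side s k y0 w :
  map_mx f (Qc side s k y0 w) = Qc side (f s) (map_mx f k) (map_mx f y0) (map_mx f w).
Proof.
rewrite /Qc; case: side; rewrite mk_map ?map_mxN ?map_mxM -?map_trmx !map_mxZ !map_mxD
  ?map_mxZ ?Ngen_map ?rmorphXn ?rmorphD ?rmorphXn ?rmorphM ?rmorphXn ?dot_map ?rmorph_nat ?rmorph1 //.
Qed.

Lemma dotZ (T : comPzRingType) (a b : T) u w : dotT (a *: u) (b *: w) = a * b * dotT u w.
Proof. rewrite !dotE !mxE; ring. Qed.
Lemma dotDZ (T : comPzRingType) (c : T) u w :
  dotT (u + c *: w) (u + c *: w) = dotT u u + 2 * c * dotT u w + c ^+ 2 * dotT w w.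
Proof. rewrite !dotE !mxE; ring. Qed.

Lemma Qc_rel (F : fieldType) side (s : F) k y0 w :
  s != 0 -> dotT k k = 0 -> dotT y0 y0 = 0 ->
  Qc side s k y0 w = s ^+ 6 *: pt side (s^-1 *: k) (s ^- 4 *: (y0 + s ^+ 2 *: w)).
Proof.
move=> hs hk hy.
have hD : Dq (s^-1 *: k) = 1 by rewrite /Dq dotZ hk mulr0 addr0.
have hN : Nmat (s^-1 *: k) = s ^- 2 *: Ngen (s ^+ 2) (2 * s) k.
  apply/matrixP => i j; rewrite /Nmat dotZ hk mulr0 subr0 !mxE crE_scale.
  case: ifP => _; field; done.
have hr : s ^+ 6 * (1 * dotT (s ^- 4 *: (y0 + s ^+ 2 *: w)) (s ^- 4 *: (y0 + s ^+ 2 *: w)))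
   = 2 * dotT y0 w + s ^+ 2 * dotT w w.
  rewrite dotZ dotDZ hy; field; done.
rewrite /pt /Qc hD hN; case: side; rewrite mk_scale mulr1 hr !scale1r !scalerA.
- congr (mkptT _ _ _ _ _).
  + congr (_ *: _); field; done.
  + congr (_ *: _); field; done.
  + rewrite scalerN -scalemxAl -scalemxAr !scalerA; congr (- _).
    rewrite -[LHS]scale1r; congr (_ *: _); field; done.
- congr (mkptT _ _ _ _ _).
  + congr (_ *: _); field; done.
  + rewrite trmxZ' scalerN -scalemxAl -scalemxAr !scalerA; congr (- _).
    rewrite -[LHS]scale1r; congr (_ *: _); field; done.
  + congr (_ *: _); field; done.
Qed.

Definition tgt (T : pzRingType) (side : bool) (X : 'cV[T]_3) (r : T) : 'rV[T]_17 :=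
  if side then mkptT 0 0 0 X r else mkptT 0 0 X 0 r.

Lemma Qc0 (T : comNzRingType) side (k y0 w : 'cV[T]_3) :
  Qc side 0 k y0 w = tgt side (- (2 * dotT k y0) *: k) (2 * dotT y0 w).
Proof.
rewrite /Qc /tgt !expr0n /= !scale0r addr0 mul0r addr0.
have E1 : Ngen 0 (2 * 0) k *m y0 = (2 * dotT k y0) *: k.
  apply/matrixP => i j; rewrite !mxE sum3 !mxE dotE (ord1 j).
  by move: i; apply: ord3P; rewrite /= !mulr0 !addr0; ring.
have E2 : (Ngen 0 (2 * 0) k)^T *m y0 = (2 * dotT k y0) *: k.
  apply/matrixP => i j; rewrite !mxE sum3 !mxE dotE (ord1 j).
  by move: i; apply: ord3P; rewrite /= !mulr0 !addr0; ring.
by case: side; rewrite ?E1 ?E2 scaleNr.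
Qed.

Lemma closure (R : realType) side (k y0 w : 'cV[R[i]]_3) d (F : {mpoly R[i][17]}) :
  F \is @ishomog1 17 R[i] d (@mdeg 17) -> vanish F ->
  dotT k k = 0 -> dotT y0 y0 = 0 ->
  meval (fun j => tgt side (- (2 * dotT k y0) *: k) (2 * dotT y0 w) 0 j) F = 0.
Proof.
move=> hF hV hk hy.
have hc : forall u : 'cV[R[i]]_3, forall z, map_mx (horner_eval z) (map_mx polyC u) = u.
  by move=> u z; apply/matrixP => i j; rewrite !mxE horner_evalE hornerC.
have E : forall z, meval (fun j => (Qc side 'X (map_mx polyC k) (map_mx polyC y0) (map_mx polyC w) 0 j).[z]) F =
   meval (fun j => Qc side z k y0 w 0 j) F.
  move=> z; have ->: Qc side z k y0 w = map_mx (horner_eval z)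
      (Qc side 'X (map_mx polyC k) (map_mx polyC y0) (map_mx polyC w)).
    rewrite Qc_map !hc; congr (Qc _ _ _ _ _); symmetry; exact: hornerX.
  apply meval_eq => j; by rewrite mxE.
rewrite -Qc0 -E.
apply: (key_poly (h := fun j => Qc side 'X (map_mx polyC k) (map_mx polyC y0) (map_mx polyC w) 0 j)) => n /=.
rewrite E Qc_rel // ?pnatr_eq0 // (meval_scale _ _ hF) (step2 _ _ _ hF hV) mulr0 //.
Qed.

Definition F0 (R : realType) (side : bool) : {mpoly R[i][17]} :=
  let o := if side then 13%N else 10%N in
  'X_(inord o) * 'X_(inord o) + 'X_(inord (o + 1)) * 'X_(inord (o + 1))
  + 'X_(inord (o + 2)) * 'X_(inord (o + 2)) - 'X_(inord 0) * 'X_(inord 16).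

Lemma F0_homog (R : realType) side : F0 R side \is @ishomog1 17 R[i] 2 (@mdeg 17).
Proof.
have hX : forall i : 'I_17, ('X_i : {mpoly R[i][17]}) \is @ishomog1 17 R[i] 1 (@mdeg 17).
  by move=> i; rewrite dhomogX; apply/eqP; exact: mdeg1.
rewrite /F0 /=; apply: rpredB; first apply: rpredD; first apply: rpredD.
all: exact: (dhomogM (hX _) (hX _)).
Qed.

Lemma F0_eval (R : realType) side (v : 'rV[R[i]]_17) :
  meval (fun k => v 0 k) (F0 R side) =
  dotT (if side then pyT v else pxT v) (if side then pyT v else pxT v) - phT v * prT v.
Proof.
rewrite /F0 dotE; case: side; rewrite !mevalB !mevalD !mevalM !mevalXU !mxE //.
Qed.

Lemma F0_vanish (R : realType) side : vanish (F0 R side).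
Proof.
move=> M y [hM _]; rewrite F0_eval /iso_pt mkptE ph_mk pr_mk px_mk py_mk mul1r.
apply/eqP; rewrite subr_eq0; apply/eqP.
have ->: toC (rdot y y) = real_complex R (dotT y y) by [].
have hv : forall u : 'cV[R]_3, map_mx (@toC R) u = map_mx (real_complex R) u by [].
case: side; rewrite /vC !hv -dot_map //.
congr (real_complex R _).
have hM' : M *m M^T = 1%:M by apply: mulmx1C.
have ->: dotT (- (M^T *m y)) (- (M^T *m y)) = dotT (M^T *m y) (M^T *m y).
  by rewrite !dotE !mxE; ring.
by rewrite /dotT trmx_mul trmxK -mulmxA (mulmxA M) hM' mul1mx.
Qed.
Lemma cV3_eq (T : pzRingType) (u w : 'cV[T]_3) :
  u i0 0 = w i0 0 -> u i1 0 = w i1 0 -> u i2 0 = w i2 0 -> u = w.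
Proof.
move=> h0 h1 h2; apply/matrixP => i j; rewrite (ord1 j); move: i; exact: ord3P.
Qed.

Section Dots.
Context (T : comPzRingType).
Implicit Types (u v w : 'cV[T]_3) (a b : T).
Lemma dotC u w : dotT u w = dotT w u. Proof. rewrite !dotE; ring. Qed.
Lemma dotDl u v w : dotT (u + v) w = dotT u w + dotT v w. Proof. rewrite !dotE !mxE; ring. Qed.
Lemma dotDr u v w : dotT w (u + v) = dotT w u + dotT w v. Proof. rewrite !dotE !mxE; ring. Qed.
Lemma dotBl u v w : dotT (u - v) w = dotT u w - dotT v w. Proof. rewrite !dotE !mxE; ring. Qed.
Lemma dotBr u v w : dotT w (u - v) = dotT w u - dotT w v. Proof. rewrite !dotE !mxE; ring. Qed.
Lemma dotZl a u w : dotT (a *: u) w = a * dotT u w. Proof. rewrite !dotE !mxE; ring. Qed.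
Lemma dotZr a u w : dotT w (a *: u) = a * dotT w u. Proof. rewrite !dotE !mxE; ring. Qed.
Lemma dot0l w : dotT 0 w = 0. Proof. rewrite !dotE !mxE; ring. Qed.
Lemma dot0r w : dotT w 0 = 0. Proof. rewrite !dotE !mxE; ring. Qed.

Definition crossv u v : 'cV[T]_3 :=
  \col_(i < 3) (if (i == 0 :> nat) then u i1 0 * v i2 0 - u i2 0 * v i1 0
                else if (i == 1 :> nat) then u i2 0 * v i0 0 - u i0 0 * v i2 0
                else u i0 0 * v i1 0 - u i1 0 * v i0 0).
Lemma crossE0 u v : crossv u v i0 0 = u i1 0 * v i2 0 - u i2 0 * v i1 0. Proof. by rewrite mxE. Qed.
Lemma crossE1 u v : crossv u v i1 0 = u i2 0 * v i0 0 - u i0 0 * v i2 0. Proof. by rewrite mxE. Qed.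
Lemma crossE2 u v : crossv u v i2 0 = u i0 0 * v i1 0 - u i1 0 * v i0 0. Proof. by rewrite mxE. Qed.
Lemma dot_cross_l u v : dotT (crossv u v) u = 0.
Proof. rewrite dotE crossE0 crossE1 crossE2; ring. Qed.
Lemma dot_cross_r u v : dotT (crossv u v) v = 0.
Proof. rewrite dotE crossE0 crossE1 crossE2; ring. Qed.
Lemma dot_cross_cross u v :
  dotT (crossv u v) (crossv u v) = dotT u u * dotT v v - dotT u v ^+ 2.
Proof. rewrite !dotE crossE0 crossE1 crossE2; ring. Qed.
Lemma cross_lin a b c e u v :
  crossv (a *: u + b *: v) (c *: u + e *: v) = (a * e - b * c) *: crossv u v.
Proof.
apply: cV3_eq; rewrite !mxE /=; ring.
Qed.
Lemma cross_dcu u d : crossv u (crossv d u) = dotT u u *: d - dotT u d *: u.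
Proof.
apply: cV3_eq; rewrite !dotE !mxE /=; ring.
Qed.
Lemma perp_id u v w (i : 'I_3) :
  w i 0 * dotT (crossv u v) (crossv u v) =
  crossv (crossv u v) u i 0 * dotT w v - crossv (crossv u v) v i 0 * dotT w u
  + crossv u v i 0 * dotT (crossv u v) w.
Proof.
move: i; apply: ord3P; rewrite !dotE !mxE /=; ring.
Qed.
End Dots.

Lemma perp0 (F : idomainType) (u v w : 'cV[F]_3) :
  dotT w u = 0 -> dotT w v = 0 -> dotT (crossv u v) w = 0 ->
  dotT (crossv u v) (crossv u v) != 0 -> w = 0.
Proof.
move=> h1 h2 h3 hc; apply/matrixP => i j; rewrite (ord1 j) mxE.
have := perp_id u v w i; rewrite h1 h2 h3 !mulr0 subrr add0r => /eqP.
by rewrite mulf_eq0 (negbTE hc) orbF => /eqP.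
Qed.

Definition reV (R : realType) (z : 'cV[R[i]]_3) : 'cV[R]_3 := \col_i complex.Re (z i 0).
Definition imV (R : realType) (z : 'cV[R[i]]_3) : 'cV[R]_3 := \col_i complex.Im (z i 0).
Definition cplx (R : realType) (u v : 'cV[R]_3) : 'cV[R[i]]_3 := \col_i (Complex (u i 0) (v i 0)).

Lemma cplx_eta (R : realType) (z : 'cV[R[i]]_3) : cplx (reV z) (imV z) = z.
Proof. by apply/matrixP => i j; rewrite (ord1 j) !mxE; case: (z i 0). Qed.
Lemma reV_cplx (R : realType) (u v : 'cV[R]_3) : reV (cplx u v) = u.
Proof. by apply/matrixP => i j; rewrite (ord1 j) !mxE. Qed.
Lemma imV_cplx (R : realType) (u v : 'cV[R]_3) : imV (cplx u v) = v.
Proof. by apply/matrixP => i j; rewrite (ord1 j) !mxE. Qed.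
Lemma vC_cplx (R : realType) (p : 'cV[R]_3) : vC p = cplx p 0.
Proof. by apply/matrixP => i j; rewrite (ord1 j) !mxE. Qed.

Lemma ceq (R : realType) (a b c d : R) : a = c -> b = d -> Complex a b = Complex c d.
Proof. by move=> -> ->. Qed.

Lemma dot_cplx (R : realType) (u v u' v' : 'cV[R]_3) :
  dotT (cplx u v) (cplx u' v') = Complex (dotT u u' - dotT v v') (dotT u v' + dotT v u').
Proof.
rewrite !dotE !mxE.
rewrite -[LHS]/(Complex _ _); apply: ceq; ring.
Qed.

Lemma scale_cplx (R : realType) (c1 c2 : R) (u v : 'cV[R]_3) :
  Complex c1 c2 *: cplx u v = cplx (c1 *: u - c2 *: v) (c2 *: u + c1 *: v).
Proof.
apply/matrixP => i j; rewrite !mxE.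
rewrite -[LHS]/(Complex _ _); apply: ceq; ring.
Qed.

Definition e0 (R : realType) : 'cV[R]_3 := \col_(i < 3) (if (i == 0 :> nat) then 1 else 0).
Lemma l0_proof (R : realType) :
  (rdot (e0 R, (0 : 'cV[R]_3)).1 (e0 R, (0 : 'cV[R]_3)).1 == 1) &&
  (rdot (e0 R, (0 : 'cV[R]_3)).1 (e0 R, (0 : 'cV[R]_3)).2 == 0).
Proof. by rewrite rdotE /= !dotE !mxE /= !mulr0 mulr1 !addr0 !eqxx. Qed.
Definition l0 (R : realType) : oline R := exist _ (e0 R, 0) (l0_proof R).

Definition lineof (R : realType) (z : 'cV[R[i]]_3) (r : R[i]) : oline R :=
  insubd (l0 R) ((dotT (reV z) (reV z))^-1 *: crossv (reV z) (imV z),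
     (complex.Re r / (2 * dotT (reV z) (reV z))) *: reV z
     + (complex.Im r / (2 * dotT (reV z) (reV z))) *: imV z).

Lemma dot_self_eq0 (R : realType) (u : 'cV[R]_3) : dotT u u = 0 -> u = 0.
Proof.
rewrite dotE => h; apply: cV3_eq; rewrite mxE; nra.
Qed.

Lemma iso_cplx (R : realType) (u v : 'cV[R]_3) :
  dotT (cplx u v) (cplx u v) = 0 -> cplx u v != 0 ->
  [/\ dotT u u = dotT v v, dotT u v = 0 & dotT u u != 0].
Proof.
rewrite dot_cplx => /eqP; rewrite eq_complex /= => /andP [/eqP h1 /eqP h2] hz.
have huv : dotT u v = 0 by move: h2; rewrite (dotC v u); lra.
have huu : dotT u u = dotT v v by lra.
split => //; apply/eqP => h0; move/negP: hz; apply; apply/eqP.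
have hu := dot_self_eq0 h0.
have hv : v = 0 by apply: dot_self_eq0; rewrite -huu.
by apply/matrixP => i j; rewrite !mxE hu hv !mxE.
Qed.

Lemma lineof_val (R : realType) (u v : 'cV[R]_3) r1 r2 :
  dotT u u = dotT v v -> dotT u v = 0 -> dotT u u != 0 ->
  val (lineof (cplx u v) (Complex r1 r2)) =
  ((dotT u u)^-1 *: crossv u v, (r1 / (2 * dotT u u)) *: u + (r2 / (2 * dotT u u)) *: v).
Proof.
move=> huu huv hm; rewrite /lineof reV_cplx imV_cplx insubdK //=.
rewrite unfold_in /= rdotE !dotZl !dotZr dot_cross_cross dotDr !dotZr dot_cross_l
  dot_cross_r -huu huv.
apply/andP; split; apply/eqP; first field; last ring.
done.
Qed.

Lemma online_iff (R : realType) (u v : 'cV[R]_3) r1 r2 p :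
  dotT u u = dotT v v -> dotT u v = 0 -> dotT u u != 0 ->
  on_line p (lineof (cplx u v) (Complex r1 r2)) <-> (r1 = 2 * dotT p u /\ r2 = 2 * dotT p v).
Proof.
move=> huu huv hm; rewrite /on_line lineof_val //=.
have hvu : dotT v u = 0 by rewrite dotC.
have hcu := dot_cross_l u v; have hcv := dot_cross_r u v.
have hcc := dot_cross_cross u v; rewrite -huu huv expr0n /= subr0 in hcc.
split.
- case => t ->; rewrite !dotDl !dotZl hcu hcv hvu huv -huu.
  split; field; done.
- case => h1 h2.
  exists ((dotT u u)^-1 * dotT (crossv u v) p).
  apply/eqP; rewrite -subr_eq0; apply/eqP; apply: (perp0 (u := u) (v := v)).
  + have hp : dotT p u = r1 / 2 by rewrite h1; field.
    rewrite !dotBl !dotDl !dotZl hcu hvu hp; field; done.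
  + have hp : dotT p v = r2 / 2 by rewrite h2; field.
    rewrite !dotBl !dotDl !dotZl hcv huv hp -huu; field; done.
  + rewrite !dotBr !dotDr !dotZr hcc hcu hcv; field; done.
  + by rewrite hcc mulf_neq0.
Qed.

Lemma pseudo_iff (R : realType) (u v : 'cV[R]_3) r1 r2 p :
  Complex r1 r2 = 2 * dotT (vC p) (cplx u v) <-> (r1 = 2 * dotT p u /\ r2 = 2 * dotT p v).
Proof.
rewrite vC_cplx dot_cplx !dot0l !subr0 !addr0.
rewrite -[2 * _]/(Complex _ _).
split; first by case=> -> ->; split; ring.
by case=> -> ->; apply: ceq; ring.
Qed.

Lemma on_line_foot (R : realType) (l : oline R) : on_line (val l).2 l.
Proof. by exists 0; rewrite scale0r addr0. Qed.

Lemma oline_eq (R : realType) (l1 l2 : oline R) :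
  (val l1).1 = (val l2).1 -> (forall p, on_line p l1 <-> on_line p l2) -> l1 = l2.
Proof.
move=> hd hl; apply: val_inj.
move: hd hl; case: l1 => [[d1 a1] H1]; case: l2 => [[d2 a2] H2] /= hd hl.
have := (hl a1).1 (on_line_foot (exist _ (d1, a1) H1)); rewrite /on_line /= => -[t ht].
have /andP [/eqP h11 /eqP h12] := H1; have /andP [/eqP h21 /eqP h22] := H2.
move: h11 h12 h21 h22 ht; rewrite /= !rdotE -hd => h11 h12 h21 h22 ht.
have : dotT d1 a1 = dotT d1 (a2 + t *: d1) by rewrite -ht.
rewrite dotDr dotZr h12 h22 h11 add0r mulr1 => ht0.
by rewrite hd ht -ht0 scale0r addr0.
Qed.

Lemma online_c (R : realType) (z : 'cV[R[i]]_3) r p :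
  dotT z z = 0 -> z != 0 ->
  on_line p (lineof z r) <-> r = 2 * dotT (vC p) z.
Proof.
rewrite -(cplx_eta z); case: r => r1 r2 hz hz0.
case: (iso_cplx hz hz0) => huu huv hm.
rewrite online_iff // pseudo_iff //.
Qed.

Lemma lineof_scale (R : realType) (z : 'cV[R[i]]_3) r (c : R[i]) :
  dotT z z = 0 -> z != 0 -> c != 0 -> lineof (c *: z) (c * r) = lineof z r.
Proof.
move=> hz hz0 hc.
have hz' : dotT (c *: z) (c *: z) = 0 by rewrite dotZl dotZr hz !mulr0.
have hz0' : c *: z != 0 by rewrite scaler_eq0 negb_or hc.
apply: oline_eq; last first.
  move=> p; rewrite !online_c // dotZr; split => [h | ->]; last by ring.
  by apply: (mulfI hc); rewrite h; ring.
move: hz hz0 hz' hz0'; rewrite -(cplx_eta z); case: c hc => c1 c2 hc.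
rewrite scale_cplx; case: r => r1 r2.
move=> hz hz0 hz' hz0'.
case: (iso_cplx hz hz0) => huu huv hm.
case: (iso_cplx hz' hz0') => huu' huv' hm'.
rewrite -[Complex c1 c2 * _]/(Complex _ _) !lineof_val //=.
have hcc : c1 ^+ 2 + c2 ^+ 2 != 0.
  apply/eqP => h0; move/negP: hc; apply; apply/eqP.
  have h1 : c1 = 0 by nra.
  have h2 : c2 = 0 by nra.
  by rewrite h1 h2.
rewrite (_ : c1 *: reV z - c2 *: imV z = c1 *: reV z + (- c2) *: imV z); last first.
  by rewrite scaleNr.
rewrite cross_lin.
rewrite !dotDl !dotDr !dotZl !dotZr (dotC (imV z)) huv -huu scalerA.
congr (_ *: _); field.
rewrite hm /= (_ : _ + _ = (c1 ^+ 2 + c2 ^+ 2) * dotT (reV z) (reV z)); last by ring.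
by rewrite mulf_neq0.
Qed.

Lemma dec_uv (R : realType) (u v w : 'cV[R]_3) :
  dotT u u = dotT v v -> dotT u v = 0 -> dotT u u != 0 -> dotT (crossv u v) w = 0 ->
  w = (dotT w u / dotT u u) *: u + (dotT w v / dotT u u) *: v.
Proof.
move=> huu huv hm hw; apply/eqP; rewrite -subr_eq0; apply/eqP.
have hvu : dotT v u = 0 by rewrite dotC.
have hcc := dot_cross_cross u v; rewrite -huu huv expr0n /= subr0 in hcc.
apply: (perp0 (u := u) (v := v)).
- rewrite !dotBl !dotDl !dotZl hvu; field; done.
- rewrite !dotBl !dotDl !dotZl huv -huu; field; done.
- rewrite !dotBr !dotDr !dotZr dot_cross_l dot_cross_r hw; ring.
- by rewrite hcc mulf_neq0.
Qed.

Lemma dir_inj (R : realType) (u v u' v' : 'cV[R]_3) :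
  dotT u u = dotT v v -> dotT u v = 0 -> dotT u u != 0 ->
  dotT u' u' = dotT v' v' -> dotT u' v' = 0 -> dotT u' u' != 0 ->
  (dotT u u)^-1 *: crossv u v = (dotT u' u')^-1 *: crossv u' v' ->
  exists2 c : R[i], c != 0 & cplx u' v' = c *: cplx u v.
Proof.
move=> huu huv hm huu' huv' hm' hd.
have hvu : dotT v u = 0 by rewrite dotC.
have hcc := dot_cross_cross u v; rewrite -huu huv expr0n /= subr0 in hcc.
have hc : crossv u v = (dotT u u / dotT u' u') *: crossv u' v'.
  by rewrite -scalerA -hd scalerA divff // scale1r.
have hcu : dotT (crossv u v) u' = 0 by rewrite hc dotZl dot_cross_l mulr0.
have hcv : dotT (crossv u v) v' = 0 by rewrite hc dotZl dot_cross_r mulr0.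
have hu' := dec_uv huu huv hm hcu; have hv' := dec_uv huu huv hm hcv.
move: (dotT u' u / _) (dotT u' v / _) hu' => a b hu'.
move: (dotT v' u / _) (dotT v' v / _) hv' => g e hv'.
subst u' v'.
move: huu' huv' hm' hc; rewrite !dotDl !dotDr !dotZl !dotZr hvu huv -huu cross_lin.
move=> huu' huv' hm' hc.
move: (dotT u u) hm hcc huu' huv' hm' hc => m hm hcc huu' huv' hm' hc.
have E1 : a * g + b * e = 0.
  apply: (mulIf hm); rewrite mul0r -huv'; ring.
have E2 : a ^+ 2 + b ^+ 2 = g ^+ 2 + e ^+ 2.
  by apply: (mulIf hm); apply: (etrans _ (etrans huu' _)); ring.
have hab : a ^+ 2 + b ^+ 2 != 0.
  apply/eqP => h0; move/negP: hm'; apply; apply/eqP.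
  rewrite (_ : _ + _ = (a ^+ 2 + b ^+ 2) * m); last by ring.
  by rewrite h0 mul0r.
have E3 : a * e - b * g = a ^+ 2 + b ^+ 2.
  have h := congr1 (fun x => dotT x (crossv u v)) hc; move: h => /=.
  rewrite !dotZl hcc => h.
  have hS : a * (a * m) + a * (b * 0) + (b * (a * 0) + b * (b * m)) = (a ^+ 2 + b ^+ 2) * m by ring.
  rewrite hS in h.
  have hm2 : m * m != 0 by rewrite mulf_neq0.
  have h2 := congr1 (fun x => x * (a ^+ 2 + b ^+ 2) / (m * m)) h; move: h2 => /=.
  move=> h2; transitivity ((m / ((a ^+ 2 + b ^+ 2) * m) * ((a * e - b * g) * (m * m))) * (a ^+ 2 + b ^+ 2) / (m * m)).
    field; by rewrite hab hm.
  rewrite -h2; field; done.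
have hsq : (g + b) ^+ 2 + (e - a) ^+ 2 = 0.
  transitivity (g ^+ 2 + e ^+ 2 + (a ^+ 2 + b ^+ 2) - 2 * (a * e - b * g)); first ring.
  rewrite -E2 E3; ring.
have s1 := sqr_ge0 (g + b); have s2 := sqr_ge0 (e - a).
have hg : g = - b.
  have : (g + b) ^+ 2 = 0 by lra.
  by move/eqP; rewrite sqrf_eq0 addr_eq0 => /eqP.
have he : e = a.
  have : (e - a) ^+ 2 = 0 by lra.
  by move/eqP; rewrite sqrf_eq0 subr_eq0 => /eqP.
exists (Complex a (- b)).
  apply/negP => /eqP [ha hb]; move/negP: hab; apply; rewrite ha (_ : b = 0) ?expr0n //= ?addr0 //.
  by rewrite -[b]opprK hb oppr0.
by rewrite scale_cplx hg he !scaleNr opprK.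
Qed.

Lemma lineof_inj (R : realType) (z z' : 'cV[R[i]]_3) r r' :
  dotT z z = 0 -> z != 0 -> dotT z' z' = 0 -> z' != 0 ->
  lineof z r = lineof z' r' -> exists2 c : R[i], c != 0 & (z' = c *: z /\ r' = c * r).
Proof.
move=> hz hz0 hz' hz0' h.
have [c hc ez] : exists2 c : R[i], c != 0 & z' = c *: z.
  move: hz hz0 hz' hz0' h; rewrite -(cplx_eta z) -(cplx_eta z').
  case: r => r1 r2; case: r' => r1' r2' hz hz0 hz' hz0' h.
  case: (iso_cplx hz hz0) => huu huv hm; case: (iso_cplx hz' hz0') => huu' huv' hm'.
  have := congr1 (fun l => (val l).1) h; rewrite /= !lineof_val // => hd.
  exact: dir_inj.
exists c => //; split => //.
have hf := on_line_foot (lineof z r).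
have hf' : on_line (val (lineof z r)).2 (lineof z' r') by rewrite -h.
move: hf hf'; rewrite (online_c _ _ hz hz0) (online_c _ _ hz' hz0') => e1 e2.
rewrite e2 ez dotZr [in RHS]e1; ring.
Qed.

Lemma lineof_surj (R : realType) (l : oline R) :
  exists z, exists r, [/\ dotT z z = 0, z != 0 & lineof z r = l].
Proof.
have [u hud hu0] : exists2 u : 'cV[R]_3, dotT u (val l).1 = 0 & dotT u u != 0.
  case: (boolP (((val l).1 i1 0 == 0) && ((val l).1 i2 0 == 0))) => E.
  - move/andP: E => [/eqP e1 /eqP e2].
    exists (\col_(i < 3) (if (i == 1 :> nat) then 1 else 0)); rewrite !dotE !mxE /= ?e1 ?e2.
      ring.
    by apply/eqP => h; lra.
  - exists (\col_(i < 3) (if (i == 0 :> nat) then 0 else if (i == 1 :> nat) then (val l).1 i2 0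
       else - (val l).1 i1 0)); rewrite !dotE !mxE /=.
      ring.
    apply/eqP => h0; move/negP: E; apply.
    have s1 := sqr_ge0 ((val l).1 i1 0); have s2 := sqr_ge0 ((val l).1 i2 0).
    have h1 : ((val l).1 i1 0) ^+ 2 = 0 by move: h0; rewrite !expr2; lra.
    have h2 : ((val l).1 i2 0) ^+ 2 = 0 by move: h0; rewrite !expr2; lra.
    by move/eqP: h1; move/eqP: h2; rewrite !sqrf_eq0 => -> ->.
case: l hud => [[d a] H] /= hud; rewrite /= in hud.
have /andP [/eqP hdd /eqP hda] := H; rewrite !rdotE /= in hdd hda.
set v := crossv d u.
have hdu : dotT d u = 0 by rewrite dotC.
have hvv : dotT u u = dotT v v by rewrite dot_cross_cross hdd hdu expr0n /= subr0 mul1r.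
have huv : dotT u v = 0 by rewrite dotC dot_cross_r.
have hdv : dotT d v = 0 by rewrite dotC dot_cross_l.
have hz : dotT (cplx u v) (cplx u v) = 0.
  rewrite dot_cplx hvv subrr huv (dotC v) huv addr0 //.
have hz0 : cplx u v != 0.
  apply/eqP => h0; move/negP: hu0; apply; apply/eqP.
  have : reV (cplx u v) = 0 by rewrite h0; apply/matrixP => i j; rewrite !mxE.
  by rewrite reV_cplx => ->; rewrite dot0l.
exists (cplx u v), (Complex (2 * dotT a u) (2 * dotT a v)); split => //.
have hcr : crossv u v = dotT u u *: d by rewrite /v cross_dcu hud scale0r subr0.
have hcc : dotT (crossv u v) (crossv u v) = dotT u u * dotT u u.
  by rewrite dot_cross_cross -hvv huv expr0n /= subr0.
clearbody v. apply: oline_eq.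
  by rewrite lineof_val //= hcr scalerA mulVf // scale1r.
move=> p; rewrite online_iff // /on_line /=; split.
- case=> h1 h2.
  exists (dotT d (p - a)).
  apply/eqP; rewrite -subr_eq0; apply/eqP; apply: (perp0 (u := u) (v := v)).
  + rewrite !dotBl !dotDl dotZl (dotC d u) hud; lra.
  + rewrite !dotBl !dotDl dotZl hdv; lra.
  + rewrite hcr !dotZl !dotBr !dotDr !dotZr hdd hda; ring.
  + by rewrite hcc mulf_neq0.
- case=> t ->; rewrite !dotDl !dotZl hdu hdv !mulr0 !addr0; split; ring.
Qed.

Lemma conj_nz (R : realType) (x : 'cV[R[i]]_3) :
  x != 0 -> dotT x (map_mx conjc x) != 0.
Proof.
move=> hx; apply/negP => /eqP h0; move/negP: hx; apply; apply/eqP.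
move: h0; rewrite -(cplx_eta x).
set u := reV x; set v := imV x.
have -> : map_mx conjc (cplx u v) = cplx u (- v).
  by apply/matrixP => i j; rewrite !mxE.
rewrite dot_cplx => /eqP; rewrite eq_complex /= => /andP [/eqP h1 _].
have hu0 : 0 <= dotT u u by rewrite dotE; nra.
have hv0 : 0 <= dotT v v by rewrite dotE; nra.
have E : dotT v (- v) = - dotT v v by rewrite !dotE !mxE; ring.
rewrite E opprK in h1.
have hu := dot_self_eq0 (u := u) ltac:(lra).
have hv := dot_self_eq0 (u := v) ltac:(lra).
by rewrite hu hv; apply/matrixP => i j; rewrite !mxE.
Qed.

Lemma tgt_inX (R : realType) side (x : 'cV[R[i]]_3) (r : R[i]) :
  dotT x x = 0 -> x != 0 ->
  forall d (F : {mpoly R[i][17]}),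
    F \is @ishomog1 17 R[i] d (@mdeg 17) -> vanish F ->
    meval (fun k => tgt side x r 0 k) F = 0.
Proof.
move=> hx hx0 d F hF hV.
set n := dotT x (map_mx conjc x).
have hn : n != 0 by exact: conj_nz.
set y0 := (- (2 * n)^-1) *: map_mx conjc x.
set w := (- r) *: x.
have hy : dotT y0 y0 = 0.
  by rewrite /y0 dotZl dotZr -dot_map hx rmorph0 !mulr0.
have E1 : - (2 * dotT x y0) = 1.
  rewrite /y0 dotZr -/n; field; done.
have E2 : 2 * dotT y0 w = r.
  rewrite /y0 /w dotZl dotZr (dotC _ x) -/n; field; done.
have := closure side w hF hV hx hy; by rewrite E1 scale1r E2.
Qed.

Lemma tgt_nz (R : realType) side (x : 'cV[R[i]]_3) r : x != 0 -> tgt side x r != 0.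
Proof.
move=> hx.
have E : (if side then pyT (tgt side x r) else pxT (tgt side x r)) = x.
  by rewrite /tgt; case: side; rewrite ?py_mk ?px_mk.
apply/negP => /eqP h0; move/negP: hx; apply; rewrite -E h0.
by clear E h0; case: side; apply/eqP/matrixP => i j; rewrite !mxE.
Qed.

Lemma tgt_left (R : realType) (x : 'cV[R[i]]_3) r :
  dotT x x = 0 -> x != 0 -> left_coll (mkpt 0 0 x 0 r).
Proof.
move=> hx hx0; rewrite mkptE.
have E : mkptT 0 0 x 0 r = tgt false x r by [].
split; last by rewrite pME pxE pyE pM_mk px_mk py_mk.
split; last by rewrite phE ph_mk.
split; first by rewrite E tgt_nz.
by move=> d F hF hV; rewrite E (tgt_inX false r hx hx0 hF hV).
Qed.

Lemma tgt_right (R : realType) (x : 'cV[R[i]]_3) r :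
  dotT x x = 0 -> x != 0 -> right_coll (mkpt 0 0 0 x r).
Proof.
move=> hx hx0; rewrite mkptE.
have E : mkptT 0 0 0 x r = tgt true x r by [].
split; last by rewrite pME pxE pyE pM_mk px_mk py_mk.
split; last by rewrite phE ph_mk.
split; first by rewrite E tgt_nz.
by move=> d F hF hV; rewrite E (tgt_inX true r hx hx0 hF hV).
Qed.

Lemma coll_iso (R : realType) side (b : 'rV[R[i]]_17) :
  inB b -> dotT (if side then py b else px b) (if side then py b else px b) = 0.
Proof.
case=> [[_ hX] hh].
have := hX 2%N _ (@F0_homog R side) (@F0_vanish R side).
rewrite F0_eval -phE hh mul0r subr0 pxE pyE; by case: side.
Qed.

Lemma left_eta (R : realType) (b : 'rV[R[i]]_17) : left_coll b -> b = mkpt 0 0 (px b) 0 (pr b).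
Proof.
case=> [[_ hh] [hM [_ hy]]].
by rewrite {1}(mk_eta b) mkptE -phE -pME -pyE -prE -pxE hh hM hy.
Qed.
Lemma right_eta (R : realType) (b : 'rV[R[i]]_17) : right_coll b -> b = mkpt 0 0 0 (py b) (pr b).
Proof.
case=> [[_ hh] [hM [hx _]]].
by rewrite {1}(mk_eta b) mkptE -phE -pME -pyE -prE -pxE hh hM hx.
Qed.

Lemma px_scale (R : realType) (c : R[i]) b : px (c *: b) = c *: px b.
Proof. by apply/matrixP => i j; rewrite !mxE. Qed.
Lemma py_scale (R : realType) (c : R[i]) b : py (c *: b) = c *: py b.
Proof. by apply/matrixP => i j; rewrite !mxE. Qed.
Lemma pr_scale (R : realType) (c : R[i]) b : pr (c *: b) = c * pr b.
Proof. by rewrite /pr mxE. Qed.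

Lemma pseudo_left (R : realType) (b : 'rV[R[i]]_17) p P :
  left_coll b -> (pseudo_sph b p P <-> pr b = 2 * dotT (vC p) (px b)).
Proof.
case=> [_ [hM [_ hy]]]; rewrite /pseudo_sph hM hy mul0mx !cdotE !dot0l !mulr0 !subr0.
by split => [/eqP | ->]; [rewrite subr_eq0 => /eqP | rewrite subrr].
Qed.
Lemma pseudo_right (R : realType) (b : 'rV[R[i]]_17) p P :
  right_coll b -> (pseudo_sph b p P <-> pr b = 2 * dotT (vC P) (py b)).
Proof.
case=> [_ [hM [hx _]]]; rewrite /pseudo_sph hM hx mul0mx !cdotE !dot0l !dot0r !mulr0 !subr0.
rewrite (dotC (py b)).
by split => [/eqP | ->]; [rewrite subr_eq0 => /eqP | rewrite subrr].
Qed.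

Theorem mainTheorem6 (R : realType) :
  (exists g : 'rV[R[i]]_17 -> oline R,
     (forall b b', left_coll b -> left_coll b' -> (g b = g b' <-> proj_eq b b')) /\
     (forall l : oline R, exists2 b, left_coll b & g b = l) /\
     (forall b, left_coll b -> forall p P : 'cV[R]_3,
        pseudo_sph b p P <-> on_line p (g b)))
  /\
  (exists g : 'rV[R[i]]_17 -> oline R,
     (forall b b', right_coll b -> right_coll b' -> (g b = g b' <-> proj_eq b b')) /\
     (forall l : oline R, exists2 b, right_coll b & g b = l) /\
     (forall b, right_coll b -> forall p P : 'cV[R]_3,
        pseudo_sph b p P <-> on_line P (g b))).
Proof.
split.
- exists (fun b => lineof (px b) (pr b)); split; [|split].
  + move=> b b' hb hb'.
    have hz := coll_iso false hb.1; have hz' := coll_iso false hb'.1.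
    have hz0 := hb.2.2.1; have hz0' := hb'.2.2.1.
    split.
    * move=> h; have [c hc [e1 e2]] := lineof_inj hz hz0 hz' hz0' h.
      exists c => //; rewrite (left_eta hb') (left_eta hb) e1 e2 !mkptE mk_scale.
      by rewrite !mulr0 !scaler0.
    * case=> c hc ->; rewrite px_scale pr_scale lineof_scale //.
  + move=> l; have [z [r [hz hz0 <-]]] := lineof_surj l.
    exists (mkpt 0 0 z 0 r); first exact: tgt_left.
    by rewrite mkptE pxE prE px_mk pr_mk.
  + move=> b hb p P; rewrite pseudo_left // online_c //.
      exact: (coll_iso false hb.1).
    exact: hb.2.2.1.
- exists (fun b => lineof (py b) (pr b)); split; [|split].
  + move=> b b' hb hb'.
    have hz := coll_iso true hb.1; have hz' := coll_iso true hb'.1.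
    have hz0 := hb.2.2.2; have hz0' := hb'.2.2.2.
    split.
    * move=> h; have [c hc [e1 e2]] := lineof_inj hz hz0 hz' hz0' h.
      exists c => //; rewrite (right_eta hb') (right_eta hb) e1 e2 !mkptE mk_scale.
      by rewrite !mulr0 !scaler0.
    * case=> c hc ->; rewrite py_scale pr_scale lineof_scale //.
  + move=> l; have [z [r [hz hz0 <-]]] := lineof_surj l.
    exists (mkpt 0 0 0 z r); first exact: tgt_right.
    by rewrite mkptE pyE prE py_mk pr_mk.
  + move=> b hb p P; rewrite pseudo_right // online_c //.
      exact: (coll_iso true hb.1).
    exact: hb.2.2.2.
Qed.
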